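(* In the induced continuum market $\widehat\Gamma$, let $M$ be a stable pseudo-matching and let $M'$ be obtained from $M$ by a type-1, type-2, or type-3 stable transformation. Then $M'$ is a stable pseudo-matching.
   Context: Finite firms $F$, finite workers $W=\{w_1,\dots,w_n\}$, null firm $\o$, $\widetilde F=F\cup\{\o\}$; each worker $w$ has a strict complete transitive preference $\succ_w$ over $\widetilde F$ ($f\succeq_w f'$ means $f\succ_w f'$ or $f=f'$); each firm $f\in F$ has a strict complete transitive preference $\succ_f$ over $2^W$, subsets identified with indicator vectors. For $f\in F$ list the sets $S\succ_f\emptyset$ as $\mathbf u^1\succ_f\cdots\succ_f\mathbf u^L$. For $\mathbf x\in[0,1]^W$ the procedure computing $\widehat{Ch}_f(\mathbf x)$ is: $t_0=0$, $\mathbf z^0=\mathbf x$, $t_k=\min\{1-\sum_{j<k}t_j,\ z^{k-1}_i: u^k_i\ne 0\}$, $\mathbf z^k=\mathbf z^{k-1}-t_k\mathbf u^k$ for $k=1,\dots,L$, and $\widehat{Ch}_f(\mathbf x)=\sum_k t_k\mathbf u^k$; $\widehat{Ch}_{\o}(\mathbf x)=\mathbf x$. A pseudo-matching is $M=(M_f)_{f\in\widetilde F}$ with each $M_f\in[0,1]^W$. For vectors, $\vee$ is componentwise max and $\le$ componentwise. Write $M'_f\succ_f M_f$ if $M'_f=\widehat{Ch}_f(M'_f\vee M_f)$ and $M'_f\neq M_f$. Let $A^{\preceq f}(M)(w)=\sum_{f'\in\widetilde F:f\succeq_w f'}M_{f'}(w)$. $M$ is stable if (i) $M_f=\widehat{Ch}_f(M_f)$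 for each $f\in F$ and $M_f(w)=0$ whenever $\o\succ_w f$; (ii) there are no $f\in F$, $M''\in[0,1]^W$ with $M''\succ_f M_f$ and $M''\le A^{\preceq f}(M)$. Stable transformations of $M$ into $M'$: Type-1: choose $f'\in F$ such that $\sum_{j=1}^L t_j<1$ in the procedure computing $\widehat{Ch}_{f'}(M_{f'})$; set $M'_{f'}=\mathbf 0$ and $M'_f=M_f$ for $f\ne f'$. Type-2: choose $f'\in F$ and an index $k$ with $t_k>0$ in the procedure computing $\widehat{Ch}_{f'}(M_{f'})$; set $M'_{f'}=\mathbf u^k$ (for $f'$'s list) and $M'_f=M_f$ for $f\neq f'$. Type-3: choose $w'\in W$ with $M_{\o}(w')\in(0,1)$; set $M'_{\o}(w')\in\{0,1\}$, $M'_{\o}(w)=M_{\o}(w)$ for $w\ne w'$, and $M'_f=M_f$ for $f\in F$. *)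

(* Defs.v *)
From HB Require Import structures.
From mathcomp Require Import all_boot all_order all_algebra.
Set Implicit Arguments.
Unset Strict Implicit.
Unset Printing Implicit Defensive.
Import Order.TTheory GRing.Theory Num.Theory.
Local Open Scope ring_scope.

(* A (finite) market: firms F, workers W; the null firm is [None : option F].
   [wpref G w a b] means  a >_w b  (strict preference of worker w);
   [fpref G f A B] means  A >_f B  (strict preference of firm f over 2^W). *)
Record market (F W : finType) := Market {
  wpref : W -> rel (option F);
  fpref : F -> rel {set W};
  wpref_irr : forall w a, ~~ wpref w a a;
  wpref_trans : forall w a b c, wpref w a b -> wpref w b c -> wpref w a c;
  wpref_total : forall w a b, a != b -> wpref w a b || wpref w b a;
  fpref_irr : forall f A, ~~ fpref f A A;
  fpref_trans : forall f A B C, fpref f A B -> fpref f B C -> fpref f A C;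
  fpref_total : forall f A B, A != B -> fpref f A B || fpref f B A
}.

Section Continuum.
Variables (R : realFieldType) (F W : finType) (G : market F W).

Definition acc_list (f : F) : seq {set W} :=
  sort (fun A B => (A == B) || fpref G f A B)
       [seq S <- enum {: {set W}} | fpref G f S set0].

(* the sequence t_1, ..., t_L of the procedure; [b] is the remaining budget
   1 - sum_{j<k} t_j and [z] the current vector z^{k-1} *)
Fixpoint tseq (us : seq {set W}) (b : R) (z : W -> R) : seq R :=
  match us with
  | [::] => [::]
  | u :: us' =>
      let t := \big[Order.min/b]_(i in u) z i in
      t :: tseq us' (b - t) (fun i => if i \in u then z i - t else z i)
  end.

Definition tseqf (f : F) (x : W -> R) : seq R := tseq (acc_list f) 1 x.

Definition ind (S : {set W}) : W -> R := fun w => (w \in S)%:R.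

Definition chhat (g : option F) (x : W -> R) : W -> R :=
  match g with
  | None => x
  | Some f => fun w =>
      \sum_(k < size (acc_list f)) (tseqf f x)`_k * ind (nth set0 (acc_list f) k) w
  end.

Definition vmax (x y : W -> R) : W -> R := fun w => Order.max (x w) (y w).
Definition vle (x y : W -> R) : Prop := forall w, x w <= y w.
Definition unit_vec (x : W -> R) : Prop := forall w, 0 <= x w <= 1.

Definition pmatching := option F -> W -> R.
Definition is_pseudo (M : pmatching) : Prop := forall g, unit_vec (M g).

Definition fprefers (f : F) (M'' Mf : W -> R) : Prop :=
  M'' = chhat (Some f) (vmax M'' Mf) /\ M'' <> Mf.

Definition Aweak (M : pmatching) (f : F) : W -> R := fun w =>
  \sum_(g : option F | (g == Some f) || wpref G w (Some f) g) M g w.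

Definition stable (M : pmatching) : Prop :=
  (forall f : F, M (Some f) = chhat (Some f) (M (Some f)) /\
     (forall w, wpref G w None (Some f) -> M (Some f) w = 0)) /\
  ~ (exists (f : F) (M'' : W -> R),
       unit_vec M'' /\ fprefers f M'' (M (Some f)) /\ vle M'' (Aweak M f)).

Definition transform1 (M M' : pmatching) : Prop :=
  exists f' : F,
    \sum_(t <- tseqf f' (M (Some f'))) t < 1 /\
    M' (Some f') = (fun _ => 0) /\
    (forall g, g != Some f' -> M' g = M g).

(* the index k is 0-based here (k = 0 is u^1) *)
Definition transform2 (M M' : pmatching) : Prop :=
  exists (f' : F) (k : nat),
    (k < size (acc_list f'))%N /\
    0 < (tseqf f' (M (Some f')))`_k /\
    M' (Some f') = ind (nth set0 (acc_list f') k) /\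
    (forall g, g != Some f' -> M' g = M g).

Definition transform3 (M M' : pmatching) : Prop :=
  exists w' : W,
    0 < M None w' < 1 /\
    (M' None w' = 0 \/ M' None w' = 1) /\
    (forall w, w != w' -> M' None w = M None w) /\
    (forall f : F, M' (Some f) = M (Some f)).

End Continuum.

(* Main.v *)
Require Import Defs.
From HB Require Import structures.
From mathcomp Require Import all_boot all_order all_algebra.
From Stdlib Require Import FunctionalExtensionality Classical.
From mathcomp Require Import lra.
Set Implicit Arguments.
Unset Strict Implicit.
Unset Printing Implicit Defensive.
Import Order.TTheory GRing.Theory Num.Theory.
Local Open Scope ring_scope.

Section Greedy.
Variables (R : realFieldType) (W : finType).
Implicit Types (us : seq {set W}) (u U : {set W}) (b t c : R) (x y z : W -> R).

Definition tm u b z : R := \big[Order.min/b]_(i in u) z i.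
Definition nz u t z : W -> R := fun i => if i \in u then z i - t else z i.

Lemma tseq_cons u us b z :
  tseq (u :: us) b z = tm u b z :: tseq us (b - tm u b z) (nz u (tm u b z) z).
Proof. by []. Qed.

Lemma size_tseq us b z : size (tseq us b z) = size us.
Proof. by elim: us b z => [//|u us IH] b z /=; rewrite IH. Qed.

Definition chs us b x w : R :=
  \sum_(k < size us) (tseq us b x)`_k * ind R (nth set0 us k) w.

Lemma chs_cons u us b x w :
  chs (u :: us) b x w = tm u b x * ind R u w + chs us (b - tm u b x) (nz u (tm u b x) x) w.
Proof. by rewrite /chs big_ord_recl. Qed.

Lemma tm_le_b u b z : tm u b z <= b.
Proof. exact: bigmin_le_id. Qed.

Lemma tm_le_z u b z i : i \in u -> tm u b z <= z i.
Proof. by move=> iu; rewrite /tm; apply: (bigmin_le_cond _ _ iu). Qed.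

Lemma tm_ge0 u b z : 0 <= b -> (forall i, 0 <= z i) -> 0 <= tm u b z.
Proof. by move=> b0 z0; apply: le_bigmin. Qed.

Lemma tm_glb u b z a : a <= b -> (forall i, i \in u -> a <= z i) -> a <= tm u b z.
Proof. by move=> ab az; apply: le_bigmin. Qed.

Lemma tm_mono u b z z' : (forall i, z i <= z' i) -> tm u b z <= tm u b z'.
Proof. move=> H; rewrite /tm; apply: le_bigmin2 => i _; exact: H. Qed.

Lemma tm_attain u b z : tm u b z = b \/ exists i, i \in u /\ tm u b z = z i.
Proof.
rewrite /tm; apply: (big_ind (fun v => v = b \/ exists i, i \in u /\ v = z i)).
- by left.
- by move=> v1 v2 H1 H2; rewrite minElt; case: ifP.
- by move=> i iu; right; exists i.
Qed.


Lemma nz_ge0 u b z : 0 <= b -> (forall i, 0 <= z i) -> forall i, 0 <= nz u (tm u b z) z i.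
Proof.
move=> b0 z0 i; rewrite /nz; case: ifP => iu //.
by rewrite subr_ge0; apply: tm_le_z.
Qed.

Lemma nz_le u t z i : 0 <= t -> nz u t z i <= z i.
Proof. by move=> t0; rewrite /nz; case: ifP => // _; rewrite lerBlDr lerDl. Qed.

Lemma tseq_ext us b z z' : (forall i, z i = z' i) -> tseq us b z = tseq us b z'.
Proof.
elim: us b z z' => [//|u us IH] b z z' H /=.
have E : tm u b z = tm u b z' by rewrite /tm; apply: eq_bigr => i _; rewrite H.
rewrite -/(tm u b z) -/(tm u b z') E; congr (_ :: _); apply: IH => i.
by rewrite /nz H.
Qed.

Lemma tseq_ge0 us b z : 0 <= b -> (forall i, 0 <= z i) ->
  forall k, 0 <= (tseq us b z)`_k.
Proof.
elim: us b z => [|u us IH] b z b0 z0 k; first by rewrite nth_nil.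
rewrite tseq_cons; case: k => [|k] /=; first exact: tm_ge0.
apply: IH; last exact: nz_ge0.
by rewrite subr_ge0 tm_le_b.
Qed.

Lemma tseq_le_b us b z : 0 <= b -> (forall i, 0 <= z i) ->
  forall k, (tseq us b z)`_k <= b.
Proof.
elim: us b z => [|u us IH] b z b0 z0 k; first by rewrite nth_nil.
rewrite tseq_cons; case: k => [|k] /=; first exact: tm_le_b.
apply: le_trans (IH _ _ _ _ k) _.
- by rewrite subr_ge0 tm_le_b.
- exact: nz_ge0.
- by rewrite lerBlDr lerDl tm_ge0.
Qed.

Lemma tseq_le_z us b z : 0 <= b -> (forall i, 0 <= z i) ->
  forall k i, (k < size us)%N -> i \in nth set0 us k -> (tseq us b z)`_k <= z i.
Proof.
elim: us b z => [|u us IH] b z b0 z0 k i //.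
rewrite tseq_cons; case: k => [|k] /= kl ik; first exact: tm_le_z.
apply: le_trans (IH _ _ _ _ k i kl ik) _.
- by rewrite subr_ge0 tm_le_b.
- exact: nz_ge0.
- by apply: nz_le; apply: tm_ge0.
Qed.

Lemma sum_tseq_le us b z : 0 <= b -> (forall i, 0 <= z i) ->
  \sum_(k < size us) (tseq us b z)`_k <= b.
Proof.
elim: us b z => [|u us IH] b z b0 z0; first by rewrite big_ord0.
rewrite big_ord_recl tseq_cons /=.
have := IH (b - tm u b z) (nz u (tm u b z) z).
rewrite subr_ge0 tm_le_b => /(_ isT (nz_ge0 _ b0 z0)).
by rewrite lerBrDl.
Qed.

Lemma chs_ge0 us b x w : 0 <= b -> (forall i, 0 <= x i) -> 0 <= chs us b x w.
Proof.
move=> b0 x0; apply: sumr_ge0 => k _; apply: mulr_ge0; first exact: tseq_ge0.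
by rewrite /ind ler0n.
Qed.

Lemma chs_le us b x w : 0 <= b -> (forall i, 0 <= x i) -> chs us b x w <= x w.
Proof.
elim: us b x => [|u us IH] b x b0 x0; first by rewrite /chs big_ord0.
rewrite chs_cons.
have H := IH (b - tm u b x) (nz u (tm u b x) x).
rewrite subr_ge0 tm_le_b in H; have {H}H := H isT (nz_ge0 _ b0 x0).
move: H; rewrite /nz /ind; case: ifP => wu H.
- by rewrite mulr1 -lerBrDl.
- by rewrite mulr0 add0r.
Qed.

Lemma chs_le_minus us b x w k : 0 <= b -> (forall i, 0 <= x i) ->
  (k < size us)%N -> w \notin nth set0 us k ->
  chs us b x w <= b - (tseq us b x)`_k.
Proof.
move=> b0 x0 kl wk.
apply: le_trans (_ : \sum_(m < size us | m != Ordinal kl) (tseq us b x)`_m <= _).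
  rewrite /chs (bigD1 (Ordinal kl)) //= /ind (negbTE wk) mulr0 add0r.
  apply: ler_sum => m _; rewrite -[X in _ <= X]mulr1; apply: ler_wpM2l.
    exact: tseq_ge0.
  by case: (w \in _).
have := sum_tseq_le us b0 x0; rewrite (bigD1 (Ordinal kl)) //=.
by rewrite lerBrDl.
Qed.

Lemma chs_le_sum us b x w : 0 <= b -> (forall i, 0 <= x i) ->
  chs us b x w <= \sum_(k < size us) (tseq us b x)`_k.
Proof.
move=> b0 x0; apply: ler_sum => m _; rewrite -[X in _ <= X]mulr1; apply: ler_wpM2l.
  exact: tseq_ge0.
by rewrite /ind; case: (w \in _).
Qed.


Lemma irc us b x z : 0 <= b -> (forall i, 0 <= x i) ->
  (forall w, chs us b x w <= z w) -> (forall w, z w <= x w) ->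
  tseq us b z = tseq us b x.
Proof.
elim: us b x z => [//|u us IH] b x z b0 x0 Hc Hz.
rewrite !tseq_cons.
have E : tm u b z = tm u b x.
  apply/eqP; rewrite eq_le tm_mono //=.
  apply: tm_glb; first exact: tm_le_b.
  move=> i iu; apply: le_trans (Hc i); rewrite chs_cons /ind iu mulr1 lerDl.
  apply: chs_ge0; first by rewrite subr_ge0 tm_le_b.
  exact: nz_ge0.
rewrite E; congr (_ :: _).
have -> : tseq us (b - tm u b x) (nz u (tm u b x) z) =
          tseq us (b - tm u b x) (nz u (tm u b z) z).
  by rewrite E.
rewrite E; apply: IH.
- by rewrite subr_ge0 tm_le_b.
- exact: nz_ge0.
- move=> w; have := Hc w; rewrite chs_cons /nz /ind; case: ifP => wu.
    by rewrite mulr1 lerBrDl addrC.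
  by rewrite mulr0 add0r.
- by move=> w; rewrite /nz; case: ifP => _; rewrite ?lerD2r Hz.
Qed.

Lemma seg us b y xt x : (forall i, y i <= xt i) -> (forall i, xt i <= x i) ->
  (forall i, xt i = y i -> x i = y i) ->
  tseq us b xt = tseq us b y -> tseq us b x = tseq us b y.
Proof.
elim: us b y xt x => [//|u us IH] b y xt x H1 H2 H3.
rewrite !tseq_cons => -[Eh Et].
have E : tm u b x = tm u b y.
  rewrite -Eh; apply/eqP; rewrite eq_le; apply/andP; split; last exact: tm_mono.
  case: (tm_attain u b xt) => [Eb|[i [iu Ei]]]; first by rewrite Eb tm_le_b.
  have xty : xt i = y i.
    apply/eqP; rewrite eq_le H1 andbT -Ei Eh; exact: tm_le_z.
  by rewrite Ei; apply: le_trans (tm_le_z b x iu) _; rewrite H3 // xty.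
rewrite E; congr (_ :: _).
apply: (IH _ _ (nz u (tm u b y) xt)).
- by move=> i; rewrite /nz; case: ifP => _; rewrite ?lerD2r H1.
- by move=> i; rewrite /nz; case: ifP => _; rewrite ?lerD2r H2.
- move=> i; rewrite /nz; case: ifP => _ Hi.
    by congr (_ - _); apply: H3; apply: (addIr (- tm u b y)).
  exact: H3.
- by move: Et; rewrite Eh.
Qed.


Lemma slack_neq us b y U c : 0 <= b -> (forall i, 0 <= y i) ->
  \sum_(k < size us) (tseq us b y)`_k < b -> U \in us -> 0 < c ->
  tseq us b (fun i => y i + c * ind R U i) <> tseq us b y.
Proof.
elim: us b y => [//|u us IH] b y b0 y0 Hs; rewrite inE => HU c0.
rewrite !tseq_cons => -[Eh Et].
rewrite big_ord_recl /= in Hs.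
have tb : tm u b y < b.
  apply: le_lt_trans Hs; rewrite lerDl; apply: sumr_ge0 => k _; apply: tseq_ge0.
    by rewrite subr_ge0 tm_le_b.
  exact: nz_ge0.
case/orP: HU => [/eqP EU|HU].
  subst U; move: Eh; case: (tm_attain u b (fun i => y i + c * ind R u i)) => [->|[i [iu ->]]].
    by move=> E; move: tb; rewrite -E ltxx.
  rewrite /ind iu mulr1 => E; have := tm_le_z b y iu; rewrite -E.
  move=> H; lra.
apply: (IH (b - tm u b y) (nz u (tm u b y) y)) => //.
- by rewrite subr_ge0 tm_le_b.
- exact: nz_ge0.
- by rewrite ltrBrDl.
- rewrite -Et -Eh; apply: tseq_ext => i; rewrite /nz.
  by case: ifP => _ //; rewrite addrAC.
Qed.

Lemma lt_budget u us b y k : 0 <= b -> (forall i, 0 <= y i) ->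
  0 < (tseq (u :: us) b y)`_k.+1 -> tm u b y < b.
Proof.
move=> b0 y0; rewrite tseq_cons /= => H.
have := tseq_le_b us (b := b - tm u b y) (z := nz u (tm u b y) y).
rewrite subr_ge0 tm_le_b => /(_ isT (nz_ge0 _ b0 y0) k) Hk.
have := lt_le_trans H Hk; by rewrite subr_gt0.
Qed.

Lemma pref_neq us b y x j k : 0 <= b -> (forall i, 0 <= y i) ->
  (forall i, y i <= x i) -> (j < k)%N -> (k < size us)%N ->
  0 < (tseq us b y)`_k ->
  (forall i, i \in nth set0 us j -> i \in nth set0 us k \/ y i < x i) ->
  tseq us b x <> tseq us b y.
Proof.
elim: us b y x j k => [//|u us IH] b y x j k b0 y0 yx jk kl sk Hj.
case: k jk kl sk Hj => [//|k] jk kl sk Hj.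
have tb := lt_budget b0 y0 sk.
rewrite !tseq_cons => -[Eh Et].
case: j jk Hj => [|j] jk Hj /=.
  move: Eh; case: (tm_attain u b x) => [->|[i [iu ->]]].
    by move=> E; move: tb; rewrite -E ltxx.
  move=> E; case: (Hj i iu) => /= [ik|lt].
    have yi : y i = tm u b y.
      apply/eqP; rewrite eq_le tm_le_z // andbT -E; exact: yx.
    move: sk; rewrite tseq_cons /=.
    have := tseq_le_z (us := us) (b := b - tm u b y) (z := nz u (tm u b y) y).
    rewrite subr_ge0 tm_le_b => /(_ isT (nz_ge0 _ b0 y0) k i kl ik).
    by rewrite /nz iu yi subrr => /le_lt_trans H /H; rewrite ltxx.
  by have := tm_le_z b y iu; rewrite -E leNgt lt.
apply: (IH (b - tm u b y) (nz u (tm u b y) y) (nz u (tm u b y) x) j k) => //.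
- by rewrite subr_ge0 tm_le_b.
- exact: nz_ge0.
- by move=> i; rewrite /nz; case: ifP => _; rewrite ?lerD2r yx.
- move=> i ij; case: (Hj i ij) => [->|lt]; [by left|right].
  by rewrite /nz; case: ifP => _; rewrite ?ltrD2r.
- by move: Et; rewrite Eh.
Qed.

Lemma pref_notsub us b y j k : 0 <= b -> (forall i, 0 <= y i) ->
  (j < k)%N -> (k < size us)%N -> 0 < (tseq us b y)`_k ->
  ~~ (nth set0 us j \subset nth set0 us k).
Proof.
elim: us b y j k => [//|u us IH] b y j k b0 y0 jk kl sk.
case: k jk kl sk => [//|k] jk kl sk.
have tb := lt_budget b0 y0 sk.
case: j jk => [|j] jk /=.
  apply/negP => sub.
  case: (tm_attain u b y) => [E|[i [iu E]]]; first by move: tb; rewrite E ltxx.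
  have ik : i \in nth set0 us k by apply: (subsetP sub).
  move: sk; rewrite tseq_cons /=.
  have := tseq_le_z (us := us) (b := b - tm u b y) (z := nz u (tm u b y) y).
  rewrite subr_ge0 tm_le_b => /(_ isT (nz_ge0 _ b0 y0) k i kl ik).
  by rewrite /nz iu E subrr => /le_lt_trans H /H; rewrite ltxx.
apply: (IH (b - tm u b y) (nz u (tm u b y) y)) => //.
- by rewrite subr_ge0 tm_le_b.
- exact: nz_ge0.
Qed.

Lemma chs_b0 us x w : (forall i, 0 <= x i) -> chs us 0 x w = 0.
Proof.
move=> x0; apply: big1 => k _.
have E : (tseq us 0 x)`_k = 0.
  by apply/eqP; rewrite eq_le tseq_le_b // tseq_ge0.
by rewrite E mul0r.
Qed.

Lemma chs_first us b x k : 0 <= b -> (forall i, 0 <= x i) -> (k < size us)%N ->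
  (forall j, (j < k)%N -> exists i, i \in nth set0 us j /\ x i = 0) ->
  (forall i, i \in nth set0 us k -> b <= x i) ->
  forall w, chs us b x w = b * ind R (nth set0 us k) w.
Proof.
elim: us b x k => [//|u us IH] b x k b0 x0 kl Hj Hk w.
rewrite chs_cons.
case: k kl Hj Hk => [|k] kl Hj Hk /=.
  have E : tm u b x = b.
    by apply/eqP; rewrite eq_le tm_le_b /=; apply: tm_glb.
  by rewrite E subrr chs_b0 ?addr0 // -E; apply: nz_ge0.
have E : tm u b x = 0.
  have [i [iu xi]] := Hj 0%N isT.
  by apply/eqP; rewrite eq_le tm_ge0 // andbT -xi; exact: tm_le_z.
rewrite E mul0r add0r subr0.
have Hx : forall i, nz u 0 x i = x i by move=> i; rewrite /nz subr0; case: ifP.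
rewrite /chs (tseq_ext _ _ Hx) -/(chs us b x w).
apply: IH => //.
- move=> j jk; exact: (Hj j.+1 jk).
Qed.

End Greedy.

Section Market.
Variables (R : realFieldType) (F W : finType) (G : market F W).
Implicit Types (x y : W -> R).

Lemma chhatE f x w : chhat G (Some f) x w = chs (acc_list G f) 1 x w.
Proof. by []. Qed.

Lemma ch_eq f x y : tseqf G f x = tseqf G f y -> chhat G (Some f) x = chhat G (Some f) y.
Proof. by move=> H; rewrite /chhat H. Qed.

Definition inr f w (g : option F) := (g == Some f) || wpref G w (Some f) g.

Lemma Aw_diff (M M' : pmatching R F W) f w g0 : (forall g, g != g0 -> M' g w = M g w) ->
  Aweak G M' f w = Aweak G M f w + (if inr f w g0 then M' g0 w - M g0 w else 0).
Proof.
move=> H; rewrite /Aweak; case: ifP => P0.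
  rewrite (bigD1 g0) // [in RHS](bigD1 g0) //=.
  rewrite (eq_bigr (fun g => M g w)); last by move=> g /andP [_ ]; apply: H.
  lra.
rewrite addr0; apply: eq_bigr => g Pg; apply: H.
by apply/negP => /eqP E; subst g; move: Pg; rewrite -/(inr f w g0) P0.
Qed.

Lemma Aw_ge2 (M : pmatching R F W) f w g1 g2 : is_pseudo M -> inr f w g1 -> inr f w g2 -> g1 != g2 ->
  M g1 w + M g2 w <= Aweak G M f w.
Proof.
move=> Mp P1 P2 ne; rewrite /Aweak (bigD1 g1) // (bigD1 g2) /=; last by move: P2; rewrite /inr => ->; rewrite eq_sym.
rewrite addrA lerDl; apply: sumr_ge0 => g _; by case/andP: (Mp g w).
Qed.

Lemma Aw_ge1 (M : pmatching R F W) f w g1 : is_pseudo M -> inr f w g1 -> M g1 w <= Aweak G M f w.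
Proof.
move=> Mp P1; rewrite /Aweak (bigD1 g1) //= lerDl.
apply: sumr_ge0 => g _; by case/andP: (Mp g w).
Qed.

Lemma inr_self f w : inr f w (Some f).
Proof. by rewrite /inr eqxx. Qed.

Lemma eps_ex (P : pred W) (g : W -> R) : (forall i, P i -> 0 < g i) ->
  exists e, 0 < e /\ forall i, P i -> e <= g i.
Proof.
move=> H; exists (\big[Order.min/1]_(i | P i) g i); split.
  by apply: lt_bigmin => //; apply: ltr01.
by move=> i Pi; apply: bigmin_le_cond.
Qed.

Lemma KL f y A A' : y = chhat G (Some f) y -> (forall i, 0 <= y i <= 1) ->
  (forall i, y i <= A i) -> (forall i, A i < A' i -> y i < A i) ->
  (exists M'', unit_vec M'' /\ fprefers G f M'' y /\ vle M'' A') ->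
  exists M'', unit_vec M'' /\ fprefers G f M'' y /\ vle M'' A.
Proof.
move=> Sy y01 yA HA [M'' [Mu [[Mch Mne] Mle]]].
set x := vmax M'' y.
set xt := fun i => Order.min (x i) (A i).
have y0 : forall i, 0 <= y i by move=> i; case/andP: (y01 i).
have x0 : forall i, 0 <= x i.
  by move=> i; rewrite /x /vmax le_max; case/andP: (Mu i) => ->.
have yx : forall i, y i <= x i by move=> i; rewrite /x /vmax le_max lexx orbT.
have x1 : forall i, x i <= 1.
  move=> i; rewrite /x /vmax ge_max; case/andP: (Mu i) => _ ->.
  by case/andP: (y01 i).
have yxt : forall i, y i <= xt i by move=> i; rewrite /xt le_min yx yA.
have xtx : forall i, xt i <= x i by move=> i; rewrite /xt ge_min lexx.
have xtA : forall i, xt i <= A i by move=> i; rewrite /xt ge_min lexx orbT.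
have xt0 : forall i, 0 <= xt i by move=> i; apply: le_trans (yxt i).
have c0 : forall w, 0 <= chhat G (Some f) xt w by move=> w; rewrite chhatE; apply: chs_ge0.
have cle : forall w, chhat G (Some f) xt w <= xt w by move=> w; rewrite chhatE; apply: chs_le.
exists (chhat G (Some f) xt); split; [|split; [split|]].
- by move=> w; rewrite c0 /=; apply: le_trans (cle w) (le_trans (xtx w) (x1 w)).
- apply: ch_eq; symmetry; apply: irc => //.
  + by move=> w; rewrite /vmax chhatE le_max lexx.
  + by move=> w; rewrite /vmax ge_max cle yxt.
- move=> E.
  have T1 : tseqf G f y = tseqf G f xt.
    apply: irc => //.
    by move=> w; rewrite -chhatE E.
  have T2 : tseqf G f x = tseqf G f y.
    apply: (@seg _ _ _ _ _ xt) => //.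
    move=> i Ei; apply/eqP; apply/negP => /negP nE.
    have lt : y i < x i by rewrite lt_neqAle eq_sym nE yx.
    have xM : x i = M'' i.
      move: lt; rewrite /x /vmax /Order.max; case: ifP => //.
      by rewrite ltxx.
    move: Ei; rewrite /xt; rewrite minElt; case: ifP => xA.
      by move=> E'; move: lt; rewrite E' ltxx.
    move=> E'; case: (ltP (A i) (A' i)) => AA'.
      by move: (HA i AA'); rewrite E' ltxx.
    have : x i <= A' i by rewrite xM; apply: Mle.
    move: lt xA; rewrite E' => lt xA H.
    have : x i <= y i by apply: le_trans H _; rewrite -E'.
    by rewrite leNgt lt.
  apply: Mne; rewrite Mch -/x (ch_eq T2); exact: esym Sy.
- by move=> w; apply: le_trans (cle w) (xtA w).
Qed.


Lemma blocker_of f y A xs : y = chhat G (Some f) y -> (forall i, 0 <= y i) ->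
  (forall i, y i <= xs i) -> (forall i, xs i <= 1) -> (forall i, xs i <= A i) ->
  tseqf G f xs <> tseqf G f y ->
  exists M'', unit_vec M'' /\ fprefers G f M'' y /\ vle M'' A.
Proof.
move=> Sy y0 yx x1 xA Hne.
have x0 : forall i, 0 <= xs i by move=> i; apply: le_trans (yx i).
have c0 : forall w, 0 <= chhat G (Some f) xs w by move=> w; rewrite chhatE; apply: chs_ge0.
have cle : forall w, chhat G (Some f) xs w <= xs w by move=> w; rewrite chhatE; apply: chs_le.
exists (chhat G (Some f) xs); split; [|split; [split|]].
- by move=> w; rewrite c0 /=; apply: le_trans (cle w) (x1 w).
- apply: ch_eq; symmetry; apply: irc => //.
  + by move=> w; rewrite /vmax chhatE le_max lexx.
  + by move=> w; rewrite /vmax ge_max cle yx.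
- move=> E; apply: Hne; symmetry; apply: irc => //.
  by move=> w; rewrite -chhatE E.
- by move=> w; apply: le_trans (cle w) (xA w).
Qed.

Lemma KLapp (M M' : pmatching R F W) f : is_pseudo M -> stable G M ->
  M' (Some f) = M (Some f) ->
  (forall i, Aweak G M f i < Aweak G M' f i -> M (Some f) i < Aweak G M f i) ->
  ~ (exists M'', unit_vec M'' /\ fprefers G f M'' (M' (Some f)) /\ vle M'' (Aweak G M' f)).
Proof.
move=> Mp [Si Sb] E HA [M'' [Mu [Mf Ml]]].
apply: Sb; exists f; apply: (KL (A' := Aweak G M' f)).
- exact: (proj1 (Si f)).
- exact: Mp.
- move=> i; apply: Aw_ge1 => //; exact: inr_self.
- exact: HA.
- by exists M''; rewrite -E.
Qed.

Lemma someF_neq (f f' : F) : f != f' -> Some f != Some f'.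
Proof. by move=> ne; apply/eqP => -[E]; move/eqP: ne. Qed.

End Market.

Section Trans.
Variables (R : realFieldType) (F W : finType) (G : market F W).

Lemma t3 (M M' : pmatching R F W) : is_pseudo M -> stable G M -> transform3 M M' ->
  is_pseudo M' /\ stable G M'.
Proof.
move=> Mp SM [w' [/andP [p0 p1] [Hv [Ho Hf]]]].
have SM' := SM; case: SM' => [Si Sb].
split.
  case=> [f|] w; first by rewrite Hf; apply: Mp.
  case: (eqVneq w w') => [->|ne]; last by rewrite Ho //; apply: Mp.
  by case: Hv => ->; rewrite lexx ?ler01.
split.
  by move=> f; rewrite Hf; apply: Si.
move=> [f Hb]; apply: (KLapp Mp SM (Hf f)) Hb => i.
have Hg : forall g, g != None -> M' g i = M g i.
  by case=> [g|] // _; rewrite Hf.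
rewrite (Aw_diff G f Hg); case: ifP => Pn; last by rewrite addr0 ltxx.
move: Pn; case: (eqVneq i w') => [->|ne] Pn; last by rewrite Ho // subrr addr0 ltxx.
move=> _; have := Aw_ge2 Mp (inr_self G f w') Pn isT.
by move=> H; apply: lt_le_trans H; rewrite ltrDl.
Qed.

End Trans.

Section Trans1.
Variables (R : realFieldType) (F W : finType) (G : market F W).

Lemma chs0 (us : seq {set W}) w : chs us 1 (fun _ : W => (0 : R)) w = 0.
Proof.
apply/eqP; rewrite eq_le chs_ge0 ?ler01 // andbT.
by apply: (@chs_le _ _ us 1 (fun _ => 0) w); rewrite ?ler01.
Qed.

Lemma vmax_pos (a b : W -> R) i : 0 <= a i -> b i <= 0 -> vmax a b i = a i.
Proof. by move=> a0 b0; rewrite /vmax max_l //; apply: le_trans a0. Qed.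

Lemma t1 (M M' : pmatching R F W) : is_pseudo M -> stable G M -> transform1 G M M' ->
  is_pseudo M' /\ stable G M'.
Proof.
move=> Mp SM [f' [Hs [E0 Eo]]].
have SM' := SM; case: SM' => [Si Sb].
split.
  move=> g w; case: (eqVneq g (Some f')) => [->|ne]; first by rewrite E0 lexx ler01.
  by rewrite Eo //; apply: Mp.
split.
  move=> f; case: (eqVneq f f') => [->|ne].
    rewrite E0; split=> //; apply: functional_extensionality => w.
    by rewrite chhatE chs0.
  by rewrite Eo; [apply: Si | apply: someF_neq].
move=> [f [M'' [Mu [Mf Ml]]]].
case: (eqVneq f f') => [Ef|ne]; last first.
  apply: (KLapp Mp SM (Eo _ (someF_neq ne))) => [i|]; last by exists M''.
  have Hg : forall g, g != Some f' -> M' g i = M g i by move=> g ng; rewrite Eo.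
  rewrite (Aw_diff G f Hg); case: ifP => _; last by rewrite addr0 ltxx.
  rewrite E0 add0r => H; exfalso; case/andP: (Mp (Some f') i) => h _; lra.
subst f; rewrite E0 in Mf; case: Mf => Mch Mne.
set y := M (Some f'); set acc := acc_list G f'.
have y0 : forall i, 0 <= y i by move=> i; case/andP: (Mp (Some f') i).
have Sy : y = chhat G (Some f') y := proj1 (Si f').
have AW : forall i, Aweak G M' f' i = Aweak G M f' i - y i.
  move=> i; have Hg : forall g, g != Some f' -> M' g i = M g i by move=> g ng; rewrite Eo.
  by rewrite (Aw_diff G f' Hg) (inr_self G f' i) E0 add0r.
have M0 : forall i, 0 <= M'' i by move=> i; case/andP: (Mu i).
have [w0 Hw0] : exists w0, M'' w0 != 0.
  case: (classic (exists w0, M'' w0 != 0)) => [//|H]; exfalso; apply: Mne.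
  apply: functional_extensionality => w; apply/eqP; apply: contraT => Hw; exfalso; apply: H.
  by exists w.
set x := vmax M'' (fun _ => 0).
have x0 : forall i, 0 <= x i by move=> i; rewrite /x (vmax_pos (M0 i)).
have [k Hk] : exists k : 'I_(size acc), (tseq acc 1 x)`_k * ind R (nth set0 acc k) w0 != 0.
  case: (classic (exists k : 'I_(size acc), (tseq acc 1 x)`_k * ind R (nth set0 acc k) w0 != 0)) => [//|H].
  exfalso; move: Hw0; rewrite {1}Mch chhatE /chs big1 ?eqxx // => k _.
  by apply/eqP; apply: contraT => Hk; exfalso; apply: H; exists k.
have tk0 : 0 < (tseq acc 1 x)`_k.
  rewrite lt_neqAle eq_sym tseq_ge0 ?ler01 // andbT.
  by apply: contraNneq Hk => ->; rewrite mul0r.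
set U := nth set0 acc k.
have UA : U \in acc by apply: mem_nth.
have UM : forall i, i \in U -> 0 < Aweak G M f' i - y i.
  move=> i iU; rewrite -AW; apply: lt_le_trans (Ml i).
  apply: lt_le_trans tk0 _; rewrite -(vmax_pos (b := fun _ => 0) (M0 i)) //.
  exact: tseq_le_z.
have Hs' : \sum_(m < size acc) (tseq acc 1 y)`_m < 1.
  by move: Hs; rewrite /tseqf (big_nth 0) size_tseq big_mkord.
have y1 : forall i, y i < 1.
  move=> i; rewrite Sy chhatE; apply: le_lt_trans Hs'.
  exact: chs_le_sum.
have [ep [ep0 Hep]] := eps_ex (P := fun i => i \in U)
   (g := fun i => Order.min (Aweak G M f' i - y i) (1 - y i))
   (fun i iU => ltac:(by rewrite lt_min UM // subr_gt0 y1)).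
apply: Sb; exists f'.
apply: (blocker_of (xs := fun i => y i + ep * ind R U i)).
- exact: (proj1 (Si f')).
- exact: y0.
- by move=> i; rewrite lerDl; apply: mulr_ge0; [exact: ltW | rewrite /ind ler0n].
- move=> i; rewrite /ind; case: (boolP (i \in U)) => iU; rewrite ?mulr1n ?mulr0n.
    by rewrite mulr1 -lerBrDl; have := Hep i iU; rewrite le_min => /andP [].
  by rewrite mulr0 addr0 ltW.
- move=> i; rewrite /ind; case: (boolP (i \in U)) => iU; rewrite ?mulr1n ?mulr0n.
    by rewrite mulr1 -lerBrDl; have := Hep i iU; rewrite le_min => /andP [].
  by rewrite mulr0 addr0; apply: Aw_ge1 => //; exact: inr_self.
- by apply: slack_neq => //; apply: ler01.
Qed.

End Trans1.

Section Trans2.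
Variables (R : realFieldType) (F W : finType) (G : market F W).

Lemma ind01 (U : {set W}) i : 0 <= ind R U i <= 1.
Proof. by rewrite /ind; case: (i \in U); rewrite ?mulr1n ?mulr0n lexx ?ler01. Qed.

Lemma t2 (M M' : pmatching R F W) : is_pseudo M -> stable G M -> transform2 G M M' ->
  is_pseudo M' /\ stable G M'.
Proof.
move=> Mp SM [f' [k [kl [sk [Ee Eo]]]]].
have SM' := SM; case: SM' => [Si Sb].
set acc := acc_list G f' in kl sk Ee.
set U := nth set0 acc k in Ee.
set y := M (Some f') in sk.
have y0 : forall i, 0 <= y i by move=> i; case/andP: (Mp (Some f') i).
have y1 : forall i, y i <= 1 by move=> i; case/andP: (Mp (Some f') i).
have Sy : y = chhat G (Some f') y := proj1 (Si f').
have sk' : 0 < (tseq acc 1 y)`_k by [].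
have yU : forall i, i \in U -> (tseq acc 1 y)`_k <= y i.
  by move=> i iU; apply: tseq_le_z => //; apply: ler01.
split.
  move=> g w; case: (eqVneq g (Some f')) => [->|ne]; first by rewrite Ee ind01.
  by rewrite Eo //; apply: Mp.
split.
  move=> f; case: (eqVneq f f') => [->|ne]; last first.
    by rewrite Eo; [apply: Si | apply: someF_neq].
  rewrite Ee; split.
    apply: functional_extensionality => w; rewrite chhatE.
    rewrite (@chs_first _ _ acc 1 (ind R U) k) ?mul1r //.
    - move=> j jk; have := pref_notsub (b := 1) (y := y) ler01 y0 jk kl sk'.
      case/subsetPn => i ij iU; exists i; split => //.
      by rewrite /ind (negbTE iU).
    - by move=> i iU; rewrite /ind iU.
  move=> w Hw; case: (boolP (w \in U)) => wU; last by rewrite /ind (negbTE wU).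
  exfalso; have := yU w wU; rewrite /y (proj2 (Si f') w Hw) => H.
  by move: (lt_le_trans sk' H); rewrite ltxx.
move=> [f [M'' [Mu [Mf Ml]]]].
case: (eqVneq f f') => [Ef|ne]; last first.
  apply: (KLapp Mp SM (Eo _ (someF_neq ne))) => [i|]; last by exists M''.
  have Hg : forall g, g != Some f' -> M' g i = M g i by move=> g ng; rewrite Eo.
  rewrite (Aw_diff G f Hg); case: ifP => Pin; last by rewrite addr0 ltxx.
  rewrite Ee => H.
  have iU : i \in U.
    apply: contraT => iU; move: H; rewrite /ind (negbTE iU) mulr0n add0r.
    have := y0 i; rewrite /y => h H; exfalso; clear -h H; lra.
  have yi : 0 < y i := lt_le_trans sk' (yU i iU).
  have := Aw_ge2 Mp (inr_self G f i) Pin (someF_neq ne).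
  rewrite -/y => H2; clear -H H2 yi; lra.
subst f; rewrite Ee in Mf; case: Mf => Mch Mne.
set e := ind R U in Mch Mne Ml.
have AW : forall i, Aweak G M' f' i = Aweak G M f' i + (e i - y i).
  move=> i; have Hg : forall g, g != Some f' -> M' g i = M g i by move=> g ng; rewrite Eo.
  by rewrite (Aw_diff G f' Hg) (inr_self G f' i) Ee.
have M0 : forall i, 0 <= M'' i by move=> i; case/andP: (Mu i).
set x := vmax M'' e.
have x0 : forall i, 0 <= x i.
  by move=> i; rewrite /x /vmax le_max M0.
have [j [jk Hj]] : exists j, (j < k)%N /\ forall i, i \in nth set0 acc j -> 0 < x i.
  case: (classic (exists j, (j < k)%N /\ forall i, i \in nth set0 acc j -> 0 < x i)) => [//|H].
  exfalso; apply: Mne; apply: functional_extensionality => w.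
  rewrite {1}Mch chhatE -/acc -/x (@chs_first _ _ acc 1 x k) ?mul1r //.
  - move=> j jk.
    case: (boolP [forall (i | i \in nth set0 acc j), 0 < x i]) => [/forall_inP Hf|/forall_inPn [i ij nx]].
      by exfalso; apply: H; exists j.
    exists i; split => //; apply/eqP; rewrite eq_le x0 andbT leNgt; exact: nx.
  - by move=> i iU; rewrite /x /vmax le_max /e /ind iU lexx orbT.
pose P := fun i => (i \notin U) && (0 < x i).
have xM : forall i, i \notin U -> x i = M'' i.
  by move=> i iU; rewrite /x /vmax /e /ind (negbTE iU) mulr0n max_l.
have PA : forall i, P i -> 0 < Aweak G M f' i - y i.
  move=> i /andP [iU xi]; have := Ml i; rewrite AW /e /ind (negbTE iU) mulr0n.
  rewrite -(xM i iU) => h; clear -h xi; lra.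
have P1 : forall i, P i -> 0 < 1 - y i.
  move=> i /andP [iU _]; rewrite Sy chhatE -/acc.
  have := @chs_le_minus _ _ acc 1 y i k ler01 y0 kl iU.
  move=> h; clear -h sk'; lra.
have [ep [ep0 Hep]] := eps_ex (P := P)
   (g := fun i => Order.min (Aweak G M f' i - y i) (1 - y i))
   (fun i Pi => ltac:(by rewrite lt_min PA // P1)).
apply: Sb; exists f'.
apply: (blocker_of (xs := fun i => if P i then y i + ep else y i)).
- exact: Sy.
- exact: y0.
- by move=> i; rewrite -/y; case: ifP => _; rewrite ?lerDl ?(ltW ep0).
- move=> i; case: ifP => Pi; last exact: y1.
  by rewrite -lerBrDl; have := Hep i Pi; rewrite le_min => /andP [].
- move=> i; case: ifP => Pi.
    by rewrite -lerBrDl; have := Hep i Pi; rewrite le_min => /andP [].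
  by apply: Aw_ge1 => //; exact: inr_self.
- apply: (@pref_neq _ _ acc 1 y _ j k) => //.
  + by move=> i; rewrite -/y; case: ifP => _; rewrite ?lerDl ?(ltW ep0).
  + move=> i ij; case: (boolP (i \in U)) => iU; [by left|right].
    have Pi : P i by rewrite /P iU Hj.
    by rewrite Pi ltrDl.
Qed.

End Trans2.

Unset Implicit Arguments.
Set Strict Implicit.
Set Printing Implicit Defensive.

Theorem lemma3 (R : realFieldType) (F W : finType) (G : market F W)
    (M M' : pmatching R F W) :
  is_pseudo M -> stable G M ->
  (transform1 G M M' \/ transform2 G M M' \/ transform3 M M') ->
  is_pseudo M' /\ stable G M'.
Proof.
move=> Mp SM [T|[T|T]].
- exact: t1 T.
- exact: t2 T.
- exact: t3 T.
Qed.
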